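(* Let $G\in T_{n,m}$ be a two-terminal graph such that the edge $st$ is not in $G$, let $e$ be any edge of $G$, and let $d$ be any positive integer. Then the two-terminal graph $G-e+st$ is $d$-stronger than $G$.
   Context: All graphs are finite, simple and undirected. A two-terminal graph is a graph $G$ together with two distinguished vertices $s,t$ (the terminals). $T_{n,m}$ denotes the set of all pairwise nonisomorphic (with isomorphisms preserving the set of terminals) two-terminal graphs with $n$ vertices and $m$ edges. For a positive integer $d$, a $d$-pathset of a two-terminal graph $G$ is a spanning subgraph of $G$ containing a path of length (number of edges) at most $d$ joining $s$ and $t$; $N_i^d(G)$ is the number of $d$-pathsets of $G$ with exactly $i$ edges. For $G,H\in T_{n,m}$, $G$ is $d$-stronger than $H$ if $N_i^d(G)\geq N_i^d(H)$ for every $i\in\{1,\ldots,m\}$ and $N_j^d(G)>N_j^d(H)$ for some $j\in\{1,\ldots,m\}$. $G-e+st$ denotes the graph obtained from $G$ by deleting edge $e$ and adding the edge $st$. *)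

(* Defs.v *)
From mathcomp Require Import all_boot.
Set Implicit Arguments. Unset Strict Implicit. Unset Printing Implicit Defensive.

(* A simple graph on the finite vertex type T is given by its edge set
   E : {set {set T}}, each edge being a 2-element set of vertices. *)
Definition simple_edges (T : finType) (E : {set {set T}}) : Prop :=
  forall x, x \in E -> #|x| = 2.

Definition edge (T : finType) (u v : T) : {set T} := [set u; v].

Definition has_short_path (T : finType) (F : {set {set T}}) (s t : T) (d : nat)
  : bool :=
  [exists k : 'I_d.+1, exists p : k.-tuple T,
     [&& path (fun x y => edge x y \in F) s p,
         last s p == t & uniq (s :: p)]].

(* N_i^d(G): number of d-pathsets (spanning subgraphs, i.e. edge subsets,
   containing an s-t path of length at most d) with exactly i edges. *)
Definition N (T : finType) (E : {set {set T}}) (s t : T) (d i : nat) : nat :=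
  #|[set F in powerset E | (#|F| == i) && has_short_path F s t d]|.

Definition d_stronger (T : finType) (E' E : {set {set T}}) (s t : T) (d : nat)
  : Prop :=
  let m := #|E| in
  (forall i, 1 <= i <= m -> N E s t d i <= N E' s t d i) /\
  (exists2 j, 1 <= j <= m & N E s t d j < N E' s t d j).

Definition swap_edge (T : finType) (E : {set {set T}}) (e : {set T}) (s t : T)
  : {set {set T}} := (E :\ e) :|: [set edge s t].

(* Main.v *)
Require Import Defs.
From mathcomp Require Import all_boot.

Lemma hsp_sub (T : finType) (F F' : {set {set T}}) s t d :
  F \subset F' -> has_short_path F s t d -> has_short_path F' s t d.
Proof.
move=> sub /existsP[k /existsP[p /and3P[hp hl hu]]].
apply/existsP; exists k; apply/existsP; exists p; rewrite hl hu !andbT.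
by apply: sub_path hp => x y; apply: (subsetP sub).
Qed.

Lemma hsp_st (T : finType) (F : {set {set T}}) s t d :
  0 < d -> s != t -> edge s t \in F -> has_short_path F s t d.
Proof.
move=> d0 st hF; apply/existsP.
have h1 : 1 < d.+1 by [].
exists (Ordinal h1); apply/existsP; exists [tuple t].
by rewrite /= hF eqxx inE st.
Qed.

Lemma hsp_single (T : finType) (e : {set T}) s t d :
  s != t -> e != edge s t -> ~~ has_short_path [set e] s t d.
Proof.
move=> st est; apply/negP => /existsP[k /existsP[[p pk] /and3P[]]] /=.
case: p pk => [|x [|y q]] _ /=.
- by move=> _ /eqP ts; rewrite ts eqxx in st.
- by rewrite inE andbT => /eqP exe /eqP xt; rewrite -exe xt eqxx in est.
- rewrite !inE => /andP[/eqP e1 /andP[/eqP e2 _]] _.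
  have : y \in edge x y by rewrite /edge !inE eqxx orbT.
  rewrite e2 -e1 /edge !inE => /orP[/eqP ys|/eqP yx].
    by rewrite ys eqxx orbT.
  by rewrite yx eqxx /= andbF.
Qed.

Theorem lemma5 (T : finType) (E : {set {set T}}) (s t : T) (e : {set T}) (d : nat) :
  simple_edges E -> s != t -> edge s t \notin E -> e \in E -> 0 < d ->
  d_stronger (swap_edge E e s t) E s t d.
Proof.
move=> _ st stE eE d0.
set st' := edge s t.
pose phi (F : {set {set T}}) := if e \in F then (F :\ e) :|: [set st'] else F.
have stF : forall F : {set {set T}}, F \subset E -> st' \notin F.
  by move=> F FE; apply/negP => /(subsetP FE); rewrite (negbTE stE).
have inj : {in powerset E &, injective phi}.
  move=> F1 F2; rewrite !inE /phi => F1E F2E.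
  have h1 := stF _ F1E; have h2 := stF _ F2E.
  case: ifP => e1; case: ifP => e2 => Heq.
  - apply/setP => x; move/setP: Heq => /(_ x).
    rewrite !inE; case: (x =P e) => [->|xe]; first by rewrite e1 e2.
    rewrite /=; case: (x =P st') => [->|_]; last by rewrite !orbF.
    by rewrite (negbTE h1) (negbTE h2).
  - by move: h2; rewrite -Heq !inE eqxx orbT.
  - by move: h1; rewrite Heq !inE eqxx orbT.
  - exact: Heq.
have cardphi : forall F : {set {set T}}, F \subset E -> #|phi F| = #|F|.
  move=> F FE; rewrite /phi; case: ifP => // eF.
  rewrite setUC cardsU1 (cardsD1 e F) eF.
  by have -> : st' \notin F :\ e by rewrite inE negb_and (stF _ FE) orbT.
have subphi : forall F : {set {set T}}, F \subset E -> phi F \subset swap_edge E e s t.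
  move=> F FE; rewrite /phi /swap_edge; case: ifP => eF.
    by rewrite setSU // setSD.
  apply/subsetP => x xF; rewrite !inE (subsetP FE x xF) andbT.
  by apply/orP; left; apply/eqP => xe; rewrite -xe xF in eF.
have hspphi : forall F, has_short_path F s t d -> has_short_path (phi F) s t d.
  move=> F hF; rewrite /phi; case: ifP => // _.
  by apply: hsp_st => //; rewrite !inE eqxx orbT.
set A := fun i => [set F in powerset E | (#|F| == i) && has_short_path F s t d].
set B := fun i => [set F in powerset (swap_edge E e s t) |
                   (#|F| == i) && has_short_path F s t d].
have sAB : forall i, phi @: A i \subset B i.
  move=> i; apply/subsetP => G /imsetP[F FA ->]; move: FA; rewrite !inE => /andP[FE /andP[/eqP Fi hF]].
  by rewrite subphi // cardphi // Fi eqxx hspphi.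
have cA : forall i, #|phi @: A i| = #|A i|.
  move=> i; apply: card_in_imset => F1 F2; rewrite !inE => /andP[h1 _] /andP[h2 _].
  by apply: inj; rewrite inE.
split.
  move=> i _; rewrite /N -/(A i) -/(B i) -cA; exact: subset_leq_card.
exists 1.
  by rewrite leqnn /= (cardD1 e) eE.
rewrite /N -/(A 1) -/(B 1) -cA; apply: proper_card; apply/properP; split => //.
exists [set st'].
  rewrite !inE cards1 eqxx /= hsp_st //; last by rewrite inE.
  by rewrite sub1set !inE eqxx orbT.
apply/imsetP => -[F]; rewrite !inE => /andP[FE /andP[/eqP F1 hF]].
rewrite /phi; case: ifP => eF Heq.
- have Fe : F = [set e].
    move/eqP: F1; rewrite (cardsD1 e) eF add1n eqSS cards_eq0 => /eqP h.
    by apply/setP => x; move/setP: h => /(_ x); rewrite !inE; case: (x =P e) => [->|].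
  rewrite Fe in hF; move: hF; apply/negP; apply: hsp_single => //.
  by apply: contraNneq stE => <-.
- by move: (stF _ FE); rewrite -Heq inE eqxx.
Qed.
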